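(* Let $X,Y$ be random variables on a probability space $(\Omega,\mathcal F,\mathbb P)$ such that $X$, $Y$ and $XY$ are integrable. Then: (i) If $X$ and $Y$ are independent, then $\{\mathbb P_A\times\mathbb P_B: A,B\in\sigma^+(X)\}\subseteq\mathcal P_{X,Y}$ and $\{\mathbb P_A\times\mathbb P_B: A,B\in\sigma^+(Y)\}\subseteq\mathcal P_{X,Y}$. (ii) If $\{\mathbb P_A\times\mathbb P_B: A,B\in\sigma^+(X)\}\subseteq\mathcal P_{X,Y}$, then for all $A,B\in\sigma^+(X)$, $\mathbb E[XY\mid A]+\mathbb E[XY\mid B]-\mathbb E[X\mid A]\mathbb E[Y\mid B]-\mathbb E[Y\mid A]\mathbb E[X\mid B]\ge0$; in particular (taking $A=B$) $\mathbb E[XY\mid A]\ge \mathbb E[X\mid A]\mathbb E[Y\mid A]$ for every $A\in\sigma^+(X)$.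
   Context: $\sigma^+(Z)=\{A\in\sigma(Z):\mathbb P(A)>0\}$, where $\sigma(Z)$ is the $\sigma$-field generated by $Z$; $\mathbb P_A=\mathbb P(\cdot\mid A)$ and $\mathbb E[\cdot\mid A]$ is expectation under $\mathbb P_A$. $\mathcal P_{X,Y}$ is the set of all product probability measures $\pi_1\times\pi_2$ on $(\Omega^2,\mathcal F\otimes\mathcal F)$ such that $\iint_{\Omega^2}(X(\omega)-X(\omega'))(Y(\omega)-Y(\omega'))\,\pi_1(\mathrm d\omega)\pi_2(\mathrm d\omega')\ge0$. *)

(* Defs.v *)
From HB Require Import structures.
From mathcomp Require Import all_boot all_order all_algebra.
From mathcomp Require Import all_classical all_reals all_analysis.
Set Implicit Arguments. Unset Strict Implicit. Unset Printing Implicit Defensive.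
Import Order.TTheory GRing.Theory Num.Theory.
Local Open Scope classical_set_scope.
Local Open Scope ring_scope.

Definition sigma_rv d (T : measurableType d) (R : realType) (Z : T -> R)
  (A : set T) : Prop :=
  exists B : set R, measurable B /\ A = Z @^-1` B.

Definition sigma_pos d (T : measurableType d) (R : realType)
  (P : probability T R) (Z : T -> R) (A : set T) : Prop :=
  sigma_rv Z A /\ (0 < P A)%E.

Definition condprob d (T : measurableType d) (R : realType)
  (P : probability T R) (A : set T) : set T -> \bar R :=
  fun C => (P (C `&` A) / P A)%E.

Definition condE d (T : measurableType d) (R : realType)
  (P : probability T R) (A : set T) (f : T -> R) : \bar R :=
  (\int[condprob P A]_w (f w)%:E)%E.

Definition indep_rv d (T : measurableType d) (R : realType)
  (P : probability T R) (X Y : T -> R) : Prop :=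
  forall B C : set R, measurable B -> measurable C ->
    P (X @^-1` B `&` Y @^-1` C) = (P (X @^-1` B) * P (Y @^-1` C))%E.

Definition in_PXY d (T : measurableType d) (R : realType)
  (X Y : T -> R) (pi1 pi2 : set T -> \bar R) : Prop :=
  (0 <= \int[(pi1 \x pi2)%E]_z
          ((X z.1 - X z.2) * (Y z.1 - Y z.2))%:E)%E.

(* Main.v *)
Require Import Defs.
From HB Require Import structures.
From mathcomp Require Import all_boot all_order all_algebra.
From mathcomp Require Import all_classical all_reals all_analysis.
From mathcomp Require Import measurable_realfun ring lra.
Import Order.TTheory GRing.Theory Num.Theory.
Set Implicit Arguments. Unset Strict Implicit. Unset Printing Implicit Defensive.
Local Open Scope classical_set_scope.
Local Open Scope ring_scope.

Definition cp d (T : measurableType d) (R : realType) (P : probability T R) (A : set T)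
  (mA : measurable A) (PA0 : (0 < P A)%E) : set T -> \bar R :=
  fun C => (P (C `&` A) / P A)%E.

Section CP.
Local Open Scope ereal_scope.
Context d (T : measurableType d) (R : realType) (P : probability T R) (A : set T).
Context (mA : measurable A) (PA0 : 0 < P A).

Let PAfin : P A \is a fin_num.
Proof. by rewrite fin_num_measure. Qed.

Let k : R := (fine (P A))^-1.
Let k0 : (0 < k)%R.
Proof. rewrite /k invr_gt0 -lte_fin fineK //. Qed.

Lemma cpE C : cp mA PA0 C = k%:E * P (C `&` A).
Proof.
rewrite /cp muleC; congr (_ * _).
rewrite -(fineK PAfin) /k /= inver ifF //.
by rewrite -eqe fineK // gt_eqF.
Qed.

Let cp0 : cp mA PA0 set0 = 0.
Proof. by rewrite cpE set0I measure0 mule0. Qed.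

Let cp_ge0 C : 0 <= cp mA PA0 C.
Proof. by rewrite /cp; apply: mule_ge0 => //; rewrite inve_ge0. Qed.

Let cp_sa : semi_sigma_additive (cp mA PA0).
Proof.
move=> F mF tF mUF; rewrite [X in X @ \oo --> _](_ : _ =
    (fun n => k%:E * \sum_(0 <= i < n) mrestr P mA (F i))); last first.
  apply/funext => n; rewrite ge0_sume_distrr; first by apply: eq_bigr => i _; rewrite cpE.
  by move=> i _; apply: measure_ge0; exact: measurableI.
rewrite cpE; apply: cvgeZl => //.
exact: (@measure_semi_sigma_additive _ _ _ (mrestr P mA) F mF tF mUF).
Qed.

HB.instance Definition _ := isMeasure.Build _ _ _ (cp mA PA0) cp0 cp_ge0 cp_sa.

Let cpT : cp mA PA0 setT = 1.
Proof. by rewrite /cp setTI divee // gt_eqF. Qed.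

HB.instance Definition _ := Measure_isProbability.Build _ _ _ (cp mA PA0) cpT.


Lemma cp_integrable (f : T -> \bar R) :
  P.-integrable setT f -> (cp mA PA0).-integrable setT f.
Proof.
move=> intf; have mf := measurable_int P intf.
apply/integrableP; split => //.
have maf : measurable_fun [set: T] (fun x : T => `|f x|)%E by apply: measurableT_comp.
have -> : cp mA PA0 = mscale (NngNum (ltW k0)) (mrestr P mA).
  by apply/funext => C; rewrite cpE.
rewrite ge0_integral_mscale //=.
apply: lte_mul_pinfty => //; first by rewrite lee_fin ltW.
apply: (@le_lt_trans _ _ (\int[P]_x `|f x|)); last by move/integrableP: intf => [].
rewrite [X in _ <= X](eq_measure_integral (measure_add (mrestr P mA) (mrestr P (measurableC mA)))); last first.
  move=> C mC _; apply: (eq_trans _ (esym (measure_addE _ _ C))).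
  by rewrite /mrestr (measureDI P mC mA) addeC setDE.
rewrite ge0_integral_measure_add //.
apply: leeDl; exact: integral_ge0.
Qed.

End CP.

Section Prod.
Local Open Scope ereal_scope.
Context d1 d2 (T1 : measurableType d1) (T2 : measurableType d2) (R : realType).
Context (m1 : probability T1 R) (m2 : probability T2 R).

Lemma int_fin d (T : measurableType d) (m : probability T R) (f : T -> R) :
  m.-integrable setT (EFin \o f) -> \int[m]_x `|(f x)%:E| \is a fin_num.
Proof.
move=> /integrableP[_ h]; rewrite ge0_fin_numE //; exact: integral_ge0.
Qed.

Lemma prod_integrable (f : T1 -> R) (g : T2 -> R) :
  m1.-integrable setT (EFin \o f) -> m2.-integrable setT (EFin \o g) ->
  (m1 \x m2).-integrable setT (fun z => (f z.1 * g z.2)%:E).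
Proof.
move=> if_ ig.
have mf : measurable_fun setT f by apply/measurable_EFinP; exact: measurable_int if_.
have mg : measurable_fun setT g by apply/measurable_EFinP; exact: measurable_int ig.
have mfg : measurable_fun setT (fun z : T1 * T2 => (f z.1 * g z.2)%:E).
  apply/measurable_EFinP; apply: measurable_funM.
    exact: measurableT_comp mf measurable_fst.
  exact: measurableT_comp mg measurable_snd.
apply/(integrable12ltyP m1 m2 mfg).
have mag : measurable_fun setT (fun y => (`|g y|)%:E).
  by apply/measurable_EFinP; apply: measurableT_comp.
have maf : measurable_fun setT (fun x => (`|f x|)%:E).
  by apply/measurable_EFinP; apply: measurableT_comp.
under eq_integral => x _.
  under eq_integral => y _ do rewrite /= normrM EFinM.
  rewrite ge0_integralZl //.
  over.
rewrite /= ge0_integralZr //; last by apply: integral_ge0.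
apply: lte_mul_pinfty.
- exact: integral_ge0.
- exact: (int_fin if_).
- by move: (int_fin ig); rewrite ge0_fin_numE //; exact: integral_ge0.
Qed.

Lemma prod_integral (f : T1 -> R) (g : T2 -> R) :
  m1.-integrable setT (EFin \o f) -> m2.-integrable setT (EFin \o g) ->
  \int[m1 \x m2]_z (f z.1 * g z.2)%:E =
  \int[m1]_x (f x)%:E * \int[m2]_y (g y)%:E.
Proof.
move=> if_ ig.
rewrite -(integral12_prod_meas1 (prod_integrable if_ ig)) /fubini_F /=.
have Gfin : \int[m2]_y (g y)%:E \is a fin_num by exact: integrable_fin_num ig.
under eq_integral => x _.
  under eq_integral => y _ do rewrite EFinM.
  rewrite (integralZl measurableT ig (f x)) -(fineK Gfin) -EFinM mulrC EFinM.
  over.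
rewrite (integralZl measurableT if_ (fine (\int[m2]_y (g y)%:E))) fineK // muleC.
by [].
Qed.

End Prod.

Definition pairf d (T : measurableType d) (R : realType) (X Y : {mfun T >-> R}) :=
  fun w => (X w, Y w).

Section Pair.
Context d (T : measurableType d) (R : realType) (X Y : {mfun T >-> R}).
Let mp : measurable_fun setT (pairf X Y).
Proof. exact: measurable_fun_pair. Qed.
HB.instance Definition _ := isMeasurableFun.Build _ _ _ _ (pairf X Y) mp.
End Pair.

Section Indep.
Local Open Scope ereal_scope.
Context d (T : measurableType d) (R : realType).

Lemma integrable_distr (Q : probability T R) (X : {mfun T >-> R}) :
  Q.-integrable setT (EFin \o X) ->
  (distribution Q X).-integrable setT (EFin \o (fun x : R => x)).
Proof.
move=> iX; apply: integrable_pushforward => //.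
by apply/measurable_EFinP.
Qed.

Lemma integral_distr (Q : probability T R) (X : {mfun T >-> R}) :
  Q.-integrable setT (EFin \o X) ->
  \int[distribution Q X]_x x%:E = \int[Q]_w (X w)%:E.
Proof.
move=> iX; rewrite (integral_distribution (f := EFin \o (fun x : R => x))) //.
by apply/measurable_EFinP.
Qed.

Lemma indep_mul (Q : probability T R) (X Y : {mfun T >-> R}) :
  (forall B C, measurable B -> measurable C ->
     Q (X @^-1` B `&` Y @^-1` C) = Q (X @^-1` B) * Q (Y @^-1` C)) ->
  Q.-integrable setT (EFin \o X) -> Q.-integrable setT (EFin \o Y) ->
  Q.-integrable setT (fun w => (X w * Y w)%:E) ->
  \int[Q]_w (X w * Y w)%:E = \int[Q]_w (X w)%:E * \int[Q]_w (Y w)%:E.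
Proof.
move=> ind iX iY iXY.
pose mu := distribution Q (pairf X Y).
have mf : measurable_fun setT (fun z : R * R => (z.1 * z.2)%:E).
  apply/measurable_EFinP; apply: measurable_funM.
    exact: measurable_fst.
  exact: measurable_snd.
transitivity (\int[mu]_z (z.1 * z.2)%:E).
  by rewrite /mu (integral_distribution (f := fun z : R * R => (z.1 * z.2)%:E)).
rewrite (eq_measure_integral (distribution Q X \x distribution Q Y)); last first.
  move=> S mS _; symmetry; apply: product_measure_unique => // B C mB mC.
rewrite (prod_integral (f := fun x => x) (g := fun x => x)).
- by rewrite !integral_distr.
- exact: integrable_distr.
- exact: integrable_distr.
Qed.

End Indep.

Section Expand.
Local Open Scope ereal_scope.
Context d (T : measurableType d) (R : realType).

Lemma alg6 (a b c e f g : \bar R) : a \is a fin_num -> b \is a fin_num ->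
  c \is a fin_num -> e \is a fin_num -> f \is a fin_num -> g \is a fin_num ->
  a * 1 + 1 * b - (c * e + f * g) = a + b - c * e - f * g.
Proof.
move=> fa fb fc fe ff fg.
rewrite -(fineK fa) -(fineK fb) -(fineK fc) -(fineK fe) -(fineK ff) -(fineK fg).
rewrite -!EFinM -!EFinD; congr EFin; ring.
Qed.

Lemma expand (m1 m2 : probability T R) (X Y : T -> R) :
  m1.-integrable setT (EFin \o X) -> m1.-integrable setT (EFin \o Y) ->
  m1.-integrable setT (fun w => (X w * Y w)%:E) ->
  m2.-integrable setT (EFin \o X) -> m2.-integrable setT (EFin \o Y) ->
  m2.-integrable setT (fun w => (X w * Y w)%:E) ->
  \int[m1 \x m2]_z ((X z.1 - X z.2) * (Y z.1 - Y z.2))%:E =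
  \int[m1]_w (X w * Y w)%:E + \int[m2]_w (X w * Y w)%:E
  - \int[m1]_w (X w)%:E * \int[m2]_w (Y w)%:E
  - \int[m1]_w (Y w)%:E * \int[m2]_w (X w)%:E.
Proof.
move=> iX1 iY1 iXY1 iX2 iY2 iXY2.
pose XY w := (X w * Y w)%R.
pose one := fun _ : T => 1%R : R.
have i11 : m1.-integrable setT (EFin \o one) by exact: finite_measure_integrable_cst.
have i12 : m2.-integrable setT (EFin \o one) by exact: finite_measure_integrable_cst.
pose F1 z := (XY z.1 * one z.2)%:E.
pose F2 z := (one z.1 * XY z.2)%:E.
pose F3 z := (X z.1 * Y z.2)%:E.
pose F4 z := (Y z.1 * X z.2)%:E.
have j1 : (m1 \x m2).-integrable setT F1 by exact: prod_integrable.
have j2 : (m1 \x m2).-integrable setT F2 by exact: prod_integrable.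
have j3 : (m1 \x m2).-integrable setT F3 by exact: prod_integrable.
have j4 : (m1 \x m2).-integrable setT F4 by exact: prod_integrable.
rewrite (eq_integral (fun z => (F1 z + F2 z) - (F3 z + F4 z))); last first.
  move=> z _; rewrite /F1 /F2 /F3 /F4 /XY /one -!EFinD; congr EFin; ring.
rewrite (@integralB _ _ _ _ _ measurableT (fun z => F1 z + F2 z) (fun z => F3 z + F4 z)); last 2 first.
- exact: (integrableD measurableT j1 j2).
- exact: (integrableD measurableT j3 j4).
rewrite (integralD measurableT j1 j2) (integralD measurableT j3 j4).
rewrite /F1 /F2 /F3 /F4 !prod_integral //.
have o1 : \int[m1]_x (one x)%:E = 1.
  by rewrite (integral_cst m1 measurableT 1) mul1e; apply: probability_setT.
have o2 : \int[m2]_x (one x)%:E = 1.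
  by rewrite (integral_cst m2 measurableT 1) mul1e; apply: probability_setT.
rewrite o1 o2 alg6 //; exact: integrable_fin_num.
Qed.

End Expand.

Section CPind.
Local Open Scope ereal_scope.
Context d (T : measurableType d) (R : realType) (P : probability T R).

Lemma law_eq (Q1 Q2 : probability T R) (Y : {mfun T >-> R}) :
  (forall C, measurable C -> Q1 (Y @^-1` C) = Q2 (Y @^-1` C)) ->
  Q1.-integrable setT (EFin \o Y) -> Q2.-integrable setT (EFin \o Y) ->
  \int[Q1]_w (Y w)%:E = \int[Q2]_w (Y w)%:E.
Proof.
move=> h i1 i2; rewrite -(integral_distr i1) -(integral_distr i2).
apply: eq_measure_integral => C mC _; exact: h.
Qed.

Lemma cp_lawY (X Y : {mfun T >-> R}) (ind : indep_rv P X Y) B0 (mB0 : measurable B0)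
  (mA : measurable (X @^-1` B0)) (PA0 : 0 < P (X @^-1` B0)) C :
  measurable C -> cp mA PA0 (Y @^-1` C) = P (Y @^-1` C).
Proof.
move=> mC; rewrite /cp setIC ind // muleAC divee ?mul1e //.
  by rewrite fin_num_measure.
by rewrite gt_eqF.
Qed.

Lemma cp_indepX (X Y : {mfun T >-> R}) (ind : indep_rv P X Y) B0 (mB0 : measurable B0)
  (mA : measurable (X @^-1` B0)) (PA0 : 0 < P (X @^-1` B0)) B C :
  measurable B -> measurable C ->
  cp mA PA0 (X @^-1` B `&` Y @^-1` C) = cp mA PA0 (X @^-1` B) * cp mA PA0 (Y @^-1` C).
Proof.
move=> mB mC; rewrite (cp_lawY ind mB0) //.
rewrite /cp setIAC -preimage_setI ind //; last exact: measurableI.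
by rewrite -preimage_setI muleAC.
Qed.

Lemma cp_lawX (X Y : {mfun T >-> R}) (ind : indep_rv P X Y) C0 (mC0 : measurable C0)
  (mA : measurable (Y @^-1` C0)) (PA0 : 0 < P (Y @^-1` C0)) B :
  measurable B -> cp mA PA0 (X @^-1` B) = P (X @^-1` B).
Proof.
move=> mB; rewrite /cp ind // -muleA divee ?mule1 //.
  by rewrite fin_num_measure.
by rewrite gt_eqF.
Qed.

Lemma cp_indepY (X Y : {mfun T >-> R}) (ind : indep_rv P X Y) C0 (mC0 : measurable C0)
  (mA : measurable (Y @^-1` C0)) (PA0 : 0 < P (Y @^-1` C0)) B C :
  measurable B -> measurable C ->
  cp mA PA0 (X @^-1` B `&` Y @^-1` C) = cp mA PA0 (X @^-1` B) * cp mA PA0 (Y @^-1` C).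
Proof.
move=> mB mC; rewrite (cp_lawX ind mC0) //.
rewrite /cp -setIA -preimage_setI ind //; last exact: measurableI.
by rewrite muleA.
Qed.

Lemma alg0 (a b y : \bar R) : a \is a fin_num -> b \is a fin_num -> y \is a fin_num ->
  0 <= a * y + b * y - a * y - y * b.
Proof.
move=> fa fb fy; rewrite -(fineK fa) -(fineK fb) -(fineK fy) -!EFinM -!EFinD lee_fin.
have -> : (fine a * fine y + fine b * fine y - fine a * fine y - fine y * fine b = 0)%R
  by ring.
by [].
Qed.

Lemma alg0' (a b x : \bar R) : a \is a fin_num -> b \is a fin_num -> x \is a fin_num ->
  0 <= x * a + x * b - x * b - a * x.
Proof.
move=> fa fb fx; rewrite -(fineK fa) -(fineK fb) -(fineK fx) -!EFinM -!EFinD lee_fin.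
have -> : (fine x * fine a + fine x * fine b - fine x * fine b - fine a * fine x = 0)%R
  by ring.
by [].
Qed.

Lemma alg2 (x y z : \bar R) : x \is a fin_num -> y \is a fin_num -> z \is a fin_num ->
  0 <= z + z - x * y - y * x -> x * y <= z.
Proof.
move=> fx fy fz; rewrite -(fineK fx) -(fineK fy) -(fineK fz) -!EFinM -!EFinD !lee_fin.
move=> h; nra.
Qed.

End CPind.

Theorem proposition4p2 (d : measure_display) (T : measurableType d)
  (R : realType) (P : probability T R) (X Y : {RV P >-> R})
  (iX : P.-integrable setT (fun w => (X w)%:E))
  (iY : P.-integrable setT (fun w => (Y w)%:E))
  (iXY : P.-integrable setT (fun w => (X w * Y w)%:E)) :
  (indep_rv P X Y ->
     (forall A B, sigma_pos P X A -> sigma_pos P X B ->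
        in_PXY X Y (condprob P A) (condprob P B)) /\
     (forall A B, sigma_pos P Y A -> sigma_pos P Y B ->
        in_PXY X Y (condprob P A) (condprob P B))) /\
  ((forall A B, sigma_pos P X A -> sigma_pos P X B ->
       in_PXY X Y (condprob P A) (condprob P B)) ->
     (forall A B, sigma_pos P X A -> sigma_pos P X B ->
        (0 <= condE P A (fun w => (X w * Y w)%R) + condE P B (fun w => (X w * Y w)%R)
              - condE P A X * condE P B Y - condE P A Y * condE P B X)%E) /\
     (forall A, sigma_pos P X A ->
        (condE P A X * condE P A Y <= condE P A (fun w => (X w * Y w)%R))%E)).
Proof.
have EXP : forall A B (mA : measurable A) (PA0 : (0 < P A)%E)
    (mB : measurable B) (PB0 : (0 < P B)%E),
    (\int[condprob P A \x condprob P B]_z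
       ((X z.1 - X z.2) * (Y z.1 - Y z.2))%:E =
     condE P A (fun w => (X w * Y w)%R) + condE P B (fun w => (X w * Y w)%R)
     - condE P A X * condE P B Y - condE P A Y * condE P B X)%E.
  move=> A B mA PA0 mB PB0.
  exact: (expand (m1 := cp mA PA0) (m2 := cp mB PB0)
    (cp_integrable mA PA0 iX) (cp_integrable mA PA0 iY) (cp_integrable mA PA0 iXY)
    (cp_integrable mB PB0 iX) (cp_integrable mB PB0 iY) (cp_integrable mB PB0 iXY)).
have FIN : forall A (mA : measurable A) (PA0 : (0 < P A)%E) (f : T -> R),
    P.-integrable setT (fun w => (f w)%:E) -> condE P A f \is a fin_num.
  move=> A mA PA0 f ifP.
  exact: (integrable_fin_num measurableT (cp_integrable mA PA0 ifP)).
split.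
  move=> ind; split.
    move=> _ _ [[B0 [mB0 ->]] PA0] [[B1 [mB1 ->]] PB0].
    have mA := measurable_funPTI X mB0; have mB := measurable_funPTI X mB1.
    rewrite /in_PXY (EXP _ _ mA PA0 mB PB0).
    have eA := indep_mul (cp_indepX ind mB0 mA PA0)
      (cp_integrable mA PA0 iX) (cp_integrable mA PA0 iY) (cp_integrable mA PA0 iXY).
    have eB := indep_mul (cp_indepX ind mB1 mB PB0)
      (cp_integrable mB PB0 iX) (cp_integrable mB PB0 iY) (cp_integrable mB PB0 iXY).
    have lA := law_eq (cp_lawY ind mB0 mA PA0) (cp_integrable mA PA0 iY) iY.
    have lB := law_eq (cp_lawY ind mB1 mB PB0) (cp_integrable mB PB0 iY) iY.
    rewrite /condE eA eB lA lB.
    apply: alg0.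
    - exact: (FIN _ mA PA0 X iX).
    - exact: (FIN _ mB PB0 X iX).
    - exact: integrable_fin_num iY.
  move=> _ _ [[C0 [mC0 ->]] PA0] [[C1 [mC1 ->]] PB0].
  have mA := measurable_funPTI Y mC0; have mB := measurable_funPTI Y mC1.
  rewrite /in_PXY (EXP _ _ mA PA0 mB PB0).
  have eA := indep_mul (cp_indepY ind mC0 mA PA0)
    (cp_integrable mA PA0 iX) (cp_integrable mA PA0 iY) (cp_integrable mA PA0 iXY).
  have eB := indep_mul (cp_indepY ind mC1 mB PB0)
    (cp_integrable mB PB0 iX) (cp_integrable mB PB0 iY) (cp_integrable mB PB0 iXY).
  have lA := law_eq (cp_lawX ind mC0 mA PA0) (cp_integrable mA PA0 iX) iX.
  have lB := law_eq (cp_lawX ind mC1 mB PB0) (cp_integrable mB PB0 iX) iX.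
  rewrite /condE eA eB lA lB.
  apply: alg0'.
  - exact: (FIN _ mA PA0 Y iY).
  - exact: (FIN _ mB PB0 Y iY).
  - exact: integrable_fin_num iX.
move=> H; split.
  move=> A B hA hB; have := H A B hA hB.
  case: hA => [[B0 [mB0 eA]] PA0]; case: hB => [[B1 [mB1 eB]] PB0].
  have mA : measurable A by rewrite eA; exact: measurable_funPTI.
  have mB : measurable B by rewrite eB; exact: measurable_funPTI.
  by rewrite /in_PXY (EXP _ _ mA PA0 mB PB0).
move=> A hA; have := H A A hA hA.
case: hA => [[B0 [mB0 eA]] PA0].
have mA : measurable A by rewrite eA; exact: measurable_funPTI.
rewrite /in_PXY (EXP _ _ mA PA0 mA PA0); apply: alg2.
- exact: (FIN _ mA PA0 X iX).
- exact: (FIN _ mA PA0 Y iY).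
- exact: (FIN _ mA PA0 _ iXY).
Qed.
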